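(* Let $\mathcal{A}$ be a topological ring containing $\mathbb{Q}$, let $\mathcal{B}$ be a complete topological $\mathcal{A}$-algebra and let $\partial$ be a topologically integrable $\mathcal{A}$-derivation of $\mathcal{B}$. Then: (a) For every $f\in\operatorname{Ker}(\partial)$, the $\mathcal{A}$-derivation $f\partial$ of $\mathcal{B}$ is topologically integrable. (b) For every multiplicatively closed subset $S$ of $\operatorname{Ker}(\partial)$, the induced $\mathcal{A}$-derivation $\widehat{S^{-1}\partial}$ of $\widehat{S^{-1}\mathcal{B}}$ is topologically integrable. (c) For every surjective open homomorphism of complete topological rings $\pi\colon\mathcal{B}\to\mathcal{C}$ such that $\partial(\operatorname{Ker}\pi)\subseteq\operatorname{Ker}\pi$, the induced $\mathcal{A}$-derivation $\overline{\partial}$ of $\mathcal{C}\cong\mathcal{B}/\operatorname{Ker}\pi$ is topologically integrable. (d) For every topologically integrable $\mathcal{A}$-derivation $\partial'$ of $\mathcal{B}$ such that $\partial\circ\partial'=\partial'\circ\partial$, the $\mathcal{A}$-derivation $\partial+\partial'$ of $\mathcal{B}$ is topologically integrable.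
   Context: Conventions: topological rings are linearly topologized with a countable fundamental system of open ideals; homomorphisms are continuous; complete means the canonical map to $\varprojlim_{\mathfrak{a}}\mathcal{B}/\mathfrak{a}$ (open ideals, discrete quotients) is a topological isomorphism; a complete topological $\mathcal{A}$-algebra is a complete topological ring with a continuous homomorphism from $\mathcal{A}$. A continuous $\mathcal{A}$-derivation $\partial\colon\mathcal{B}\to\mathcal{B}$ is a continuous $\mathcal{A}$-linear map satisfying the Leibniz rule; it is topologically integrable if the sequence of iterates $(\partial^i)_{i\in\mathbb{N}}$ converges continuously to $0$: for every $b\in\mathcal{B}$ and every open ideal $\mathfrak{b}'$ there exist an open ideal $\mathfrak{b}$ and $n_0$ with $\partial^n(b+\mathfrak{b})\subseteq\mathfrak{b}'$ for all $n\ge n_0$. For a multiplicatively closed $S\subseteq\mathcal{B}$, $\widehat{S^{-1}\mathcal{B}}$ is the separated completion of $S^{-1}\mathcal{B}$ for the linear topology generated by the ideals $S^{-1}\mathfrak{b}$, $\mathfrak{b}$ open, with canonical map $\tilde j\colon\mathcal{B}\to\widehat{S^{-1}\mathcal{B}}$, and $\widehat{S^{-1}\partial}$ is the continuous derivation of $\widehat{S^{-1}\mathcal{B}}$ induced by $\partial$ (satisfying $\widehat{S^{-1}\partial}\circ\tilde j=\tilde j\circ\partial$). In (c), $\overline{\partial}$ is the derivation with $\overline{\partial}\circ\pi=\pi\circ\partial$. *)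

(* Defs.v *)
From HB Require Import structures.
From mathcomp Require Import all_boot all_order all_algebra.
Set Implicit Arguments. Unset Strict Implicit. Unset Printing Implicit Defensive.
Import GRing.Theory.
Local Open Scope ring_scope.

Definition is_ideal (R : comPzRingType) (U : R -> Prop) : Prop :=
  [/\ U 0, (forall x y, U x -> U y -> U (x + y)) & (forall r x, U x -> U (r * x))].

(* a linear topology with a countable fundamental system of open ideals
   (normalized to be decreasing, which is no loss of generality) *)
Record lintop (R : comPzRingType) := Lintop {
  fsys : nat -> R -> Prop;
  fsys_ideal : forall n, is_ideal (fsys n);
  fsys_decr : forall n x, fsys n.+1 x -> fsys n x }.

Definition open_ideal (R : comPzRingType) (T : lintop R) (U : R -> Prop) : Prop :=
  is_ideal U /\ exists n, forall x, fsys T n x -> U x.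

(* continuity of an additive map: preimage of every open ideal is open
   (for an additive map this is continuity) *)
Definition hom_continuous (R1 R2 : comPzRingType) (T1 : lintop R1) (T2 : lintop R2)
  (f : R1 -> R2) : Prop :=
  forall U, open_ideal T2 U -> exists n, forall x, fsys T1 n x -> U (f x).

(* openness of a surjective additive map: the image of every open ideal
   contains (hence, being a subgroup, is) an open neighbourhood of 0 *)
Definition hom_open (R1 R2 : comPzRingType) (T1 : lintop R1) (T2 : lintop R2)
  (f : R1 -> R2) : Prop :=
  forall U, open_ideal T1 U ->
    exists n, forall c, fsys T2 n c -> exists b, U b /\ f b = c.

(* completeness: the canonical map R -> lim_n R/a_n is bijective
   (it is then automatically a topological isomorphism) *)
Definition complete (R : comPzRingType) (T : lintop R) : Prop :=
  (forall x, (forall n, fsys T n x) -> x = 0) /\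
  (forall x : nat -> R, (forall n, fsys T n (x n.+1 - x n)) ->
     exists b, forall n, fsys T n (b - x n)).

Definition derivation (A R : comPzRingType) (phi : A -> R) (T : lintop R)
  (d : R -> R) : Prop :=
  [/\ (forall x y, d (x + y) = d x + d y),
      (forall x y, d (x * y) = d x * y + x * d y),
      (forall a x, d (phi a * x) = phi a * d x)
    & hom_continuous T T d].

(* topological integrability: the iterates converge continuously to 0 *)
Definition top_integrable (R : comPzRingType) (T : lintop R) (d : R -> R) : Prop :=
  forall b U', open_ideal T U' ->
    exists U n0, open_ideal T U /\
      forall n x, (n0 <= n)%N -> U x -> U' (iter n d (b + x)).

Definition mult_closed (R : comPzRingType) (S : R -> Prop) : Prop :=
  S 1 /\ forall x y, S x -> S y -> S (x * y).

(* (D, TD, j) is the separated completion of S^{-1}R for the topology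
   generated by the S^{-1} a_n:  D is complete, j(S) consists of units,
   the fundamental system of D pulls back along S^{-1}R -> D, b/s |-> j b / j s,
   exactly to the ideals S^{-1} a_n  (b/s in S^{-1}a_n iff t b in a_n for
   some t in S), and the image of S^{-1}R is dense. *)
Definition loc_completion (R : comPzRingType) (T : lintop R) (S : R -> Prop)
  (D : comPzRingType) (TD : lintop D) (j : R -> D) : Prop :=
  [/\ complete TD,
      (forall s, S s -> exists u, j s * u = 1),
      (forall n b s u, S s -> j s * u = 1 ->
         (fsys TD n (j b * u) <-> exists t, S t /\ fsys T n (t * b)))
    & (forall y n, exists b s u, [/\ S s, j s * u = 1 & fsys TD n (y - j b * u)])].

(* Main.v *)
Require Import Defs.
From HB Require Import structures.
From mathcomp Require Import all_boot all_order all_algebra.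
From mathcomp Require Import zify.
Set Implicit Arguments. Unset Strict Implicit.
Import GRing.Theory.
Local Open Scope ring_scope.

Section Gen.
Variables (R : comPzRingType) (T : lintop R).

Lemma fsys0 n : fsys T n 0. Proof. by case: (fsys_ideal T n). Qed.
Lemma fsysD n x y : fsys T n x -> fsys T n y -> fsys T n (x + y).
Proof. by case: (fsys_ideal T n) => _ H _; apply: H. Qed.
Lemma fsysM n r x : fsys T n x -> fsys T n (r * x).
Proof. by case: (fsys_ideal T n) => _ _ H; apply: H. Qed.
Lemma fsysN n x : fsys T n x -> fsys T n (- x).
Proof. by move=> h; rewrite -mulN1r; apply: fsysM. Qed.
Lemma fsysB n x y : fsys T n x -> fsys T n y -> fsys T n (x - y).
Proof. by move=> hx hy; apply: fsysD => //; apply: fsysN. Qed.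
Lemma fsys_le m n x : (m <= n)%N -> fsys T n x -> fsys T m x.
Proof.
move=> /subnK <-; elim: (n - m)%N => [|k IH]; first by rewrite add0n.
by rewrite addSn => /fsys_decr; apply: IH.
Qed.
Lemma open_fsys n : open_ideal T (fsys T n).
Proof. by split; [exact: fsys_ideal | exists n]. Qed.

Variable d : R -> R.
Hypothesis dD : forall x y, d (x + y) = d x + d y.

Lemma d0 : d 0 = 0.
Proof. by apply: (addrI (d 0)); rewrite -dD !addr0. Qed.

Lemma iterD k x y : iter k d (x + y) = iter k d x + iter k d y.
Proof. by elim: k => [|k IH] //=; rewrite IH dD. Qed.

Definition EQ := forall m, exists n, forall k x, fsys T n x -> fsys T m (iter k d x).
Definition PW := forall b m, exists n0, forall k, (n0 <= k)%N -> fsys T m (iter k d b).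

Lemma TI_of : EQ -> PW -> top_integrable T d.
Proof.
move=> heq hpw b U' [hU' [m hm]].
have [n hn] := heq m. have [n0 hn0] := hpw b m.
exists (fsys T n), n0; split; first exact: open_fsys.
move=> k x hk hx; apply: hm; rewrite iterD; apply: fsysD; [exact: hn0 | exact: hn].
Qed.

Hypothesis dC : hom_continuous T T d.

Lemma iter_cont k m : exists n, forall x, fsys T n x -> fsys T m (iter k d x).
Proof.
elim: k m => [|k IH] m; first by exists m.
have [n1 h1] := IH m. have [n hn] := dC (open_fsys n1).
by exists n => x hx; rewrite iterSr; apply: h1; exact: hn.
Qed.

End Gen.

Lemma finmax (P : nat -> nat -> Prop) :
  (forall l, exists K, forall k, (K <= k)%N -> P l k) ->
  forall M, exists K, forall l k, (l < M)%N -> (K <= k)%N -> P l k.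
Proof.
move=> h; elim=> [|M [K IH]]; first by exists 0%N.
have [K' hK'] := h M; exists (maxn K K') => l k.
rewrite ltnS leq_eqVlt => /orP [/eqP -> | hl] hk.
- by apply: hK'; exact: leq_trans (leq_maxr _ _) hk.
- by apply: IH => //; exact: leq_trans (leq_maxl _ _) hk.
Qed.

Lemma of_TI (R : comPzRingType) (T : lintop R) (d : R -> R) :
  (forall x y, d (x + y) = d x + d y) -> hom_continuous T T d ->
  top_integrable T d -> EQ T d /\ PW T d.
Proof.
move=> dD dC hti; split.
- move=> m.
  have [U [n0 [[_ [n1 hn1]] hU]]] := hti 0 (fsys T m) (open_fsys T m).
  have hP : forall l, exists K, forall N, (K <= N)%N ->
      forall x, fsys T N x -> fsys T m (iter l d x).
    move=> l; have [N hN] := iter_cont dC l m.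
    by exists N => N' hN' x hx; apply: hN; exact: fsys_le hN' hx.
  have [K hK] := finmax (P := fun l N => forall x, fsys T N x -> fsys T m (iter l d x)) hP n0.
  exists (maxn K n1) => k x hx.
  case: (ltnP k n0) => hk.
  + by apply: (hK k (maxn K n1)) => //; exact: leq_maxl.
  + by have := hU k x hk (hn1 x (fsys_le (leq_maxr _ _) hx)); rewrite add0r.
- move=> b m.
  have [U [n0 [[[U0 _ _] _] hU]]] := hti b (fsys T m) (open_fsys T m).
  by exists n0 => k hk; have := hU k 0 hk U0; rewrite addr0.
Qed.

Lemma part_a (A R : comPzRingType) (phi : A -> R) (T : lintop R) (d : R -> R) :
  derivation phi T d -> top_integrable T d ->
  forall f, d f = 0 -> top_integrable T (fun x => f * d x).
Proof.
case=> dD dM _ dC hti f hf.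
have [heq hpw] := of_TI dD dC hti.
have d1 : d 1 = 0.
  have h := dM 1 1; rewrite !(mul1r, mulr1) in h.
  by apply: (addrI (d 1)); rewrite addr0 -h.
have dc : forall c y, d c = 0 -> d (c * y) = c * d y.
  by move=> c y hc; rewrite dM hc mul0r add0r.
have dfk : forall k, d (f ^+ k) = 0.
  elim=> [|k IH]; first by rewrite expr0.
  by rewrite exprS dc // IH mulr0.
have it : forall k x, iter k (fun x => f * d x) x = f ^+ k * iter k d x.
  elim=> [|k IH] x /=; first by rewrite expr0 mul1r.
  by rewrite IH dc // exprS mulrA.
apply: TI_of.
- by move=> x y; rewrite dD mulrDr.
- move=> m; have [n hn] := heq m; exists n => k x hx; rewrite it.
  by apply: fsysM; apply: hn.
- move=> b m; have [n0 hn0] := hpw b m; exists n0 => k hk; rewrite it.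
  by apply: fsysM; apply: hn0.
Qed.

Lemma part_c (A B : comPzRingType) (phi : A -> B) (TB : lintop B) (d : B -> B) :
  derivation phi TB d -> top_integrable TB d ->
  forall (C : comPzRingType) (TC : lintop C) (pi : {rmorphism B -> C}),
    hom_continuous TB TC pi -> hom_open TB TC pi ->
    (forall c, exists b, pi b = c) ->
    forall db : C -> C, (forall b, db (pi b) = pi (d b)) ->
      top_integrable TC db.
Proof.
case=> dD dM _ dC hti C TC pi hpc hpo hsurj db hdb.
have [heq hpw] := of_TI dD dC hti.
have hit : forall k b, iter k db (pi b) = pi (iter k d b).
  by elim=> [|k IH] b //=; rewrite IH hdb.
apply: TI_of.
- move=> c1 c2; have [b1 <-] := hsurj c1; have [b2 <-] := hsurj c2.
  by rewrite -rmorphD !hdb dD rmorphD.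
- move=> m; have [p hp] := hpc _ (open_fsys TC m).
  have [n hn] := heq p; have [q hq] := hpo _ (open_fsys TB n).
  exists q => k c hc; have [x [hx <-]] := hq c hc.
  by rewrite hit; apply: hp; apply: hn.
- move=> c m; have [b <-] := hsurj c.
  have [p hp] := hpc _ (open_fsys TC m).
  have [n0 hn0] := hpw b p; exists n0 => k hk.
  by rewrite hit; apply: hp; apply: hn0.
Qed.

Lemma comb (R : comPzRingType) (U : R -> Prop) (d d' : R -> R) :
  (forall x y, U x -> U y -> U (x + y)) ->
  (forall x y, d (x + y) = d x + d y) ->
  (forall x y, d' (x + y) = d' x + d' y) ->
  (forall x, d (d' x) = d' (d x)) ->
  forall n x, (forall k l, (k + l = n)%N -> U (iter k d (iter l d' x))) ->
    U (iter n (fun y => d y + d' y) x).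
Proof.
move=> Uadd dD d'D comm.
have cl : forall l x, iter l d' (d x) = d (iter l d' x).
  by elim=> [|l IH] x //=; rewrite IH comm.
have sD : forall x y, (d (x + y) + d' (x + y)) = (d x + d' x) + (d y + d' y).
  by move=> x y; rewrite dD d'D addrACA.
elim=> [|n IH] x h; first exact: (h 0%N 0%N).
rewrite iterSr (iterD sD); apply: Uadd; apply: IH => k l hkl.
- rewrite cl -iterSr; apply: h; by rewrite addSn hkl.
- rewrite -iterSr; apply: h; by rewrite addnS hkl.
Qed.

Lemma part_d (A B : comPzRingType) (phi : A -> B) (TB : lintop B) (d : B -> B) :
  derivation phi TB d -> top_integrable TB d ->
  forall d' : B -> B, derivation phi TB d' -> top_integrable TB d' ->
    (forall x, d (d' x) = d' (d x)) ->
    top_integrable TB (fun x => d x + d' x).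
Proof.
case=> dD _ _ dC hti d' [d'D _ _ d'C] hti' comm.
have [heq hpw] := of_TI dD dC hti.
have [heq' hpw'] := of_TI d'D d'C hti'.
apply: TI_of.
- by move=> x y; rewrite dD d'D addrACA.
- move=> m; have [n1 hn1] := heq m; have [n2 hn2] := heq' n1.
  exists n2 => k x hx; apply: comb => //; first exact: fsysD.
  by move=> a l _; apply: hn1; apply: hn2.
- move=> b m; have [n1 hn1] := heq m; have [M hM] := hpw' b n1.
  have hP : forall l, exists K, forall k, (K <= k)%N -> fsys TB m (iter k d (iter l d' b)).
    by move=> l; apply: hpw.
  have [K hK] := finmax hP M.
  exists (K + M)%N => n hn; apply: comb => //; first exact: fsysD.
  move=> k l hkl; case: (ltnP l M) => hl.
  + apply: hK => //; lia.
  + by apply: hn1; apply: hM.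
Qed.

Lemma part_b (A B : comPzRingType) (phi : A -> B) (TB : lintop B) (d : B -> B) :
  derivation phi TB d -> top_integrable TB d ->
  forall (S : B -> Prop), mult_closed S -> (forall s, S s -> d s = 0) ->
  forall (D : comPzRingType) (TD : lintop D) (j : {rmorphism B -> D}),
    loc_completion TB S TD j ->
    forall (psi : A -> D) (dh : D -> D), derivation psi TD dh ->
      (forall b, dh (j b) = j (d b)) -> top_integrable TD dh.
Proof.
case=> dD dM _ dC hti S [S1 _] hSd D TD j [_ hunit hchar hdense] psi dh
  [hD hM _ hC] hj.
have [heq hpw] := of_TI dD dC hti.
have dh1 : dh 1 = 0.
  have h := hM 1 1; rewrite !(mul1r, mulr1) in h.
  by apply: (addrI (dh 1)); rewrite addr0 -h.
have dhu : forall s u, S s -> j s * u = 1 -> dh u = 0.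
  move=> s u hs hsu; have := hM (j s) u.
  rewrite hsu dh1 hj hSd // rmorph0 mul0r add0r => h.
  by rewrite -[dh u]mul1r -hsu (mulrC (j s)) -mulrA -h mulr0.
have itj : forall k b s u, S s -> j s * u = 1 -> iter k dh (j b * u) = j (iter k d b) * u.
  move=> k b s u hs hsu; elim: k => [|k IH] //=.
  by rewrite IH hM hj (dhu s u) // mulr0 addr0.
have dt : forall k t y, d t = 0 -> iter k d (t * y) = t * iter k d y.
  move=> k t y ht; elim: k => [|k IH] //=.
  by rewrite IH dM ht mul0r add0r.
have heqh : EQ TD dh.
  move=> m; have [p hp] := heq m; exists p => k z hz.
  have [q hq] := iter_cont hC k m.
  have [b [s [u [hs hsu he]]]] := hdense z (maxn p q).
  have he1 : fsys TD p (z - j b * u) := fsys_le (leq_maxl _ _) he.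
  have he2 : fsys TD q (z - j b * u) := fsys_le (leq_maxr _ _) he.
  have hbu : fsys TD p (j b * u).
    have -> : j b * u = z - (z - j b * u) by rewrite opprB addrC subrK.
    exact: fsysB.
  have [t [ht htb]] := (hchar p b s u hs hsu).1 hbu.
  have hmt : fsys TB m (t * iter k d b).
    by rewrite -dt ?hSd //; apply: hp.
  have hjm : fsys TD m (j (iter k d b) * u).
    by apply: (hchar m (iter k d b) s u hs hsu).2; exists t.
  have -> : z = j b * u + (z - j b * u) by rewrite addrC subrK.
  rewrite (iterD hD); apply: fsysD; first by rewrite (itj k b s u).
  exact: hq.
have hpwh : PW TD dh.
  move=> y m; have [n hn] := heqh m.
  have [b [s [u [hs hsu he]]]] := hdense y n.
  have [n0 hn0] := hpw b m; exists n0 => k hk.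
  have -> : y = j b * u + (y - j b * u) by rewrite addrC subrK.
  rewrite (iterD hD); apply: fsysD; last exact: hn.
  rewrite (itj k b s u) //; apply: (hchar m _ s u hs hsu).2.
  by exists 1; split => //; rewrite mul1r; apply: hn0.
exact: TI_of hD heqh hpwh.
Qed.

Theorem proposition2p28
  (A : comNzRingType) (TA : lintop A)
  (B : comPzRingType) (TB : lintop B)
  (phi : {rmorphism A -> B})
  (d : B -> B) :
  (forall n : nat, exists u : A, (n.+1)%:R * u = 1) ->
  hom_continuous TA TB phi ->
  complete TB ->
  derivation phi TB d ->
  top_integrable TB d ->
  [/\ (* (a) *)
      (forall f : B, d f = 0 -> top_integrable TB (fun x => f * d x)),
      (* (b) *)
      (forall (S : B -> Prop), mult_closed S -> (forall s, S s -> d s = 0) ->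
       forall (D : comPzRingType) (TD : lintop D) (j : {rmorphism B -> D}),
         loc_completion TB S TD j ->
         forall dh : D -> D, derivation (fun a => j (phi a)) TD dh ->
           (forall b, dh (j b) = j (d b)) ->
           top_integrable TD dh),
      (* (c) *)
      (forall (C : comPzRingType) (TC : lintop C) (pi : {rmorphism B -> C}),
         complete TC -> hom_continuous TB TC pi -> hom_open TB TC pi ->
         (forall c, exists b, pi b = c) ->
         (forall b, pi b = 0 -> pi (d b) = 0) ->
         forall db : C -> C, (forall b, db (pi b) = pi (d b)) ->
           top_integrable TC db)
    & (* (d) *)
      (forall d' : B -> B, derivation phi TB d' -> top_integrable TB d' ->
         (forall x, d (d' x) = d' (d x)) ->
         top_integrable TB (fun x => d x + d' x))].
Proof.
move=> _ _ _ hd hti; split.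
- exact: part_a hd hti.
- move=> S hS hSd D TD j hl dh hdh hj.
  exact: part_b hd hti S hS hSd D TD j hl _ dh hdh hj.
- move=> C TC pi _ hpc hpo hsurj _ db hdb.
  exact: part_c hd hti C TC pi hpc hpo hsurj db hdb.
- move=> d' hd' hti' comm; exact: part_d hd hti d' hd' hti' comm.
Qed.
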